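(* For every $s>1/4$ there is $C$ depending only on $s$ such that for every finite linear combination $w$ of the functions $w_{ij}$, $$\|Tr(w)\|_{X^{s-1/4}(I)}\le C\|w\|_{X^s(\Omega)},$$ where $Tr(w)(x_1)=w(x_1,0)$. Consequently $Tr$ extends uniquely to a bounded operator $X^s(\Omega)\to X^{s-1/4}(I)$.
   Context: $I_+=(0,1)$, $I=(-1,1)$, $\Omega=I\times I_+$. $u_i(x_1)=c_{1i}\cos(i\pi(x_1+1)/2)$, $v_j(x_2)=c_{2j}\cos(j\pi x_2)$, $w_{ij}=u_i(x_1)v_j(x_2)$ ($i,j\ge0$), $c_{10}=1/\sqrt2$, $c_{1i}=1$ ($i\ge1$), $c_{20}=1$, $c_{2j}=\sqrt2$ ($j\ge1$). $\lambda^I_i=-(i\pi/2)^2$, $\lambda^\Omega_{ij}=-(i\pi/2)^2-(j\pi)^2$. For $s\ge0$: $X^s(I)=\{u\in L_2(I):\|u\|^2_{X^s(I)}=\sum_i(1-\lambda^I_i)^{2s}(u|u_i)_{L_2}^2<\infty\}$, $X^s(\Omega)=\{w\in L_2(\Omega):\|w\|^2_{X^s(\Omega)}=\sum_{i,j}(1-\lambda^\Omega_{ij})^{2s}(w|w_{ij})_{L_2}^2<\infty\}$. *)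

(* Defs.v *)
From Stdlib Require Import Reals Lra ClassicalEpsilon.
Open Scope R_scope.

(* Riemann integral of f over [a,b] (value of RiemannInt, which is
   independent of the integrability proof); 0 if f is not Riemann integrable. *)
Definition Rint (f : R -> R) (a b : R) : R :=
  match excluded_middle_informative (inhabited (Riemann_integrable f a b)) with
  | left H => RiemannInt (epsilon H (fun _ => True))
  | right _ => 0
  end.

(* limit of a real sequence (0 if it does not converge) *)
Definition Rlim (u : nat -> R) : R :=
  match excluded_middle_informative (exists l, Un_cv u l) with
  | left H => proj1_sig (constructive_indefinite_description _ H)
  | right _ => 0
  end.

Definition c1 (i : nat) : R := if Nat.eqb i 0 then / sqrt 2 else 1.
Definition c2 (j : nat) : R := if Nat.eqb j 0 then 1 else sqrt 2.

Definition u (i : nat) (x1 : R) : R := c1 i * cos (INR i * PI * (x1 + 1) / 2).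
Definition v (j : nat) (x2 : R) : R := c2 j * cos (INR j * PI * x2).
Definition wf (i j : nat) (x1 x2 : R) : R := u i x1 * v j x2.

Definition lamI (i : nat) : R := - (INR i * PI / 2) ^ 2.
Definition lamO (i j : nat) : R := - (INR i * PI / 2) ^ 2 - (INR j * PI) ^ 2.

(* L2 inner products on I = (-1,1) and Omega = I x (0,1) (iterated integral) *)
Definition ipI (f g : R -> R) : R := Rint (fun x => f x * g x) (-1) 1.
Definition ipO (f g : R -> R -> R) : R :=
  Rint (fun x2 => Rint (fun x1 => f x1 x2 * g x1 x2) (-1) 1) 0 1.

Definition XI_partial (s : R) (f : R -> R) (N : nat) : R :=
  sum_f_R0 (fun i => Rpower (1 - lamI i) (2 * s) * (ipI f (u i)) ^ 2) N.
Definition XO_partial (s : R) (w : R -> R -> R) (N : nat) : R :=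
  sum_f_R0 (fun i => sum_f_R0 (fun j =>
     Rpower (1 - lamO i j) (2 * s) * (ipO w (wf i j)) ^ 2) N) N.

Definition in_XI (s : R) (f : R -> R) : Prop := exists l, Un_cv (XI_partial s f) l.
Definition in_XO (s : R) (w : R -> R -> R) : Prop := exists l, Un_cv (XO_partial s w) l.
Definition XI_norm (s : R) (f : R -> R) : R := sqrt (Rlim (XI_partial s f)).
Definition XO_norm (s : R) (w : R -> R -> R) : R := sqrt (Rlim (XO_partial s w)).

Definition lincomb (N M : nat) (a : nat -> nat -> R) (x1 x2 : R) : R :=
  sum_f_R0 (fun i => sum_f_R0 (fun j => a i j * wf i j x1 x2) M) N.

Definition Tr (w : R -> R -> R) (x1 : R) : R := w x1 0.

(* Main.v *)
Require Import Defs.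
From Stdlib Require Import Reals.
Open Scope R_scope.
From Stdlib Require Import Lra Lia ZArith ClassicalEpsilon FunctionalExtensionality.
From Coquelicot Require Import Coquelicot.
Require Import Defs.
Open Scope R_scope.

Lemma Rint_is (f : R -> R) a b v : is_RInt f a b v -> Rint f a b = v.
Proof.
  intros H. unfold Rint. destruct (excluded_middle_informative _) as [h|h].
  - rewrite <- (RInt_Reals f a b). now apply is_RInt_unique.
  - exfalso; apply h; constructor; apply ex_RInt_Reals_0; exists v; exact H.
Qed.

Lemma int_cos_lin (c d a b : R) : c <> 0 ->
  is_RInt (fun x => cos (c*x+d)) a b ((sin (c*b+d) - sin (c*a+d))/c).
Proof.
  intros Hc.
  replace ((sin (c*b+d) - sin (c*a+d))/c) with
    (minus (sin (c*b+d)/c) (sin (c*a+d)/c))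
    by (unfold minus, plus, opp; simpl; field; auto).
  apply (is_RInt_derive (fun x => sin (c*x+d)/c)).
  - intros x _. auto_derive; [trivial| field; auto].
  - intros x _. apply (ex_derive_continuous (fun x => cos (c*x+d))). auto_derive. trivial.
Qed.

Lemma sinZ (z : Z) : sin (IZR z * PI) = 0.
Proof. apply sin_eq_0_1. now exists z. Qed.

Lemma int_u_cos (z : Z) :
  is_RInt (fun x => cos (IZR z * PI * (x+1)/2)) (-1) 1 (if Z.eqb z 0 then 2 else 0).
Proof.
  destruct (Z.eqb_spec z 0) as [->|Hz].
  - apply is_RInt_ext with (f := fun _ => 1).
    + intros x _. simpl. replace (0 * PI * (x+1)/2) with 0 by field. now rewrite cos_0.
    + replace 2 with (scal (1 - -1) 1) by (cbv [scal]; simpl; unfold mult; simpl; ring).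
      exact (is_RInt_const (V:=R_NormedModule) _ _ 1).
  - assert (Hr : IZR z <> 0) by (apply not_0_IZR; exact Hz).
    assert (Hc : IZR z * PI / 2 <> 0).
    { apply Rmult_integral_contrapositive_currified; [|lra].
      apply Rmult_integral_contrapositive_currified; [exact Hr| apply PI_neq0]. }
    apply is_RInt_ext with (f := fun x => cos (IZR z * PI / 2 * x + IZR z * PI / 2)).
    + intros x _. f_equal. field.
    + replace 0 with ((sin (IZR z * PI / 2 * 1 + IZR z * PI / 2) - sin (IZR z * PI / 2 * -1 + IZR z * PI / 2)) / (IZR z * PI / 2)).
      * apply int_cos_lin; exact Hc.
      * replace (IZR z * PI / 2 * 1 + IZR z * PI / 2) with (IZR z * PI) by field.
        replace (IZR z * PI / 2 * -1 + IZR z * PI / 2) with 0 by field.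
        rewrite sinZ, sin_0. field. split; [apply PI_neq0|exact Hr].
Qed.

Lemma int_v_cos (z : Z) :
  is_RInt (fun x => cos (IZR z * PI * x)) 0 1 (if Z.eqb z 0 then 1 else 0).
Proof.
  destruct (Z.eqb_spec z 0) as [->|Hz].
  - apply is_RInt_ext with (f := fun _ => 1).
    + intros x _. simpl. replace (0 * PI * x) with 0 by ring. now rewrite cos_0.
    + replace 1 with (scal (1 - 0) 1) at 2 by (cbv [scal]; simpl; unfold mult; simpl; ring).
      exact (is_RInt_const (V:=R_NormedModule) _ _ 1).
  - assert (Hr : IZR z <> 0) by (apply not_0_IZR; exact Hz).
    assert (Hc : IZR z * PI <> 0).
    { apply Rmult_integral_contrapositive_currified; [exact Hr| apply PI_neq0]. }
    apply is_RInt_ext with (f := fun x => cos (IZR z * PI * x + 0)).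
    + intros x _. f_equal. ring.
    + replace 0 with ((sin (IZR z * PI * 1 + 0) - sin (IZR z * PI * 0 + 0)) / (IZR z * PI)) at 2.
      * apply int_cos_lin; exact Hc.
      * replace (IZR z * PI * 1 + 0) with (IZR z * PI) by ring.
        replace (IZR z * PI * 0 + 0) with 0 by ring.
        rewrite sinZ, sin_0. field. split; [apply PI_neq0|exact Hr].
Qed.

Lemma prod_cos a b : cos a * cos b = (cos (a-b) + cos (a+b))/2.
Proof. rewrite cos_minus, cos_plus. field. Qed.

Lemma sqrt2_sq : sqrt 2 * sqrt 2 = 2.
Proof. apply sqrt_sqrt. lra. Qed.

Lemma sqrt2_pos : 0 < sqrt 2.
Proof. apply sqrt_lt_R0. lra. Qed.

Definition dl (i k : nat) : R := if Nat.eqb i k then 1 else 0.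

Lemma PU (i k : nat) : is_RInt (fun x => u i x * u k x) (-1) 1 (dl i k).
Proof.
  pose proof (is_RInt_scal _ _ _ (c1 i * c1 k / 2) _
    (is_RInt_plus _ _ _ _ _ _ (int_u_cos (Z.of_nat i - Z.of_nat k))
                              (int_u_cos (Z.of_nat i + Z.of_nat k)))) as H.
  eapply is_RInt_ext; [|replace (dl i k) with (scal (c1 i * c1 k / 2)
           (plus (if Z.eqb (Z.of_nat i - Z.of_nat k) 0 then 2 else 0)
                 (if Z.eqb (Z.of_nat i + Z.of_nat k) 0 then 2 else 0))); [exact H|]].
  - intros x _. cbv [scal plus]; simpl; unfold mult; simpl. unfold u.
    rewrite minus_IZR, plus_IZR, <- !INR_IZR_INZ.
    replace (c1 i * cos (INR i * PI * (x + 1) / 2) * (c1 k * cos (INR k * PI * (x + 1) / 2)))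
      with (c1 i * c1 k * (cos (INR i * PI * (x + 1) / 2) * cos (INR k * PI * (x + 1) / 2))) by ring.
    rewrite prod_cos.
    replace (INR i * PI * (x + 1) / 2 - INR k * PI * (x + 1) / 2) with ((INR i - INR k) * PI * (x + 1) / 2) by field.
    replace (INR i * PI * (x + 1) / 2 + INR k * PI * (x + 1) / 2) with ((INR i + INR k) * PI * (x + 1) / 2) by field.
    field.
  - cbv [scal plus]; simpl; unfold mult; simpl. unfold dl.
    destruct (Nat.eqb_spec i k) as [<-|Hik].
    + rewrite Z.sub_diag. simpl Z.eqb.
      destruct i as [|i].
      * simpl. unfold c1. simpl.
        pose proof sqrt2_sq. pose proof sqrt2_pos. field_simplify; [|lra].
        simpl pow; rewrite Rmult_1_r, H0; field.
      * destruct (Z.eqb_spec (Z.of_nat (S i) + Z.of_nat (S i)) 0); [lia|].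
        unfold c1. simpl. field.
    + destruct (Z.eqb_spec (Z.of_nat i - Z.of_nat k) 0); [lia|].
      destruct (Z.eqb_spec (Z.of_nat i + Z.of_nat k) 0); [lia|]. ring.
Qed.

Lemma PV (j l : nat) : is_RInt (fun x => v j x * v l x) 0 1 (dl j l).
Proof.
  pose proof (is_RInt_scal _ _ _ (c2 j * c2 l / 2) _
    (is_RInt_plus _ _ _ _ _ _ (int_v_cos (Z.of_nat j - Z.of_nat l))
                              (int_v_cos (Z.of_nat j + Z.of_nat l)))) as H.
  eapply is_RInt_ext; [|replace (dl j l) with (scal (c2 j * c2 l / 2)
           (plus (if Z.eqb (Z.of_nat j - Z.of_nat l) 0 then 1 else 0)
                 (if Z.eqb (Z.of_nat j + Z.of_nat l) 0 then 1 else 0))); [exact H|]].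
  - intros x _. cbv [scal plus]; simpl; unfold mult; simpl. unfold v.
    rewrite minus_IZR, plus_IZR, <- !INR_IZR_INZ.
    replace (c2 j * cos (INR j * PI * x) * (c2 l * cos (INR l * PI * x)))
      with (c2 j * c2 l * (cos (INR j * PI * x) * cos (INR l * PI * x))) by ring.
    rewrite prod_cos.
    replace (INR j * PI * x - INR l * PI * x) with ((INR j - INR l) * PI * x) by ring.
    replace (INR j * PI * x + INR l * PI * x) with ((INR j + INR l) * PI * x) by ring.
    field.
  - cbv [scal plus]; simpl; unfold mult; simpl. unfold dl.
    destruct (Nat.eqb_spec j l) as [<-|Hik].
    + rewrite Z.sub_diag. simpl Z.eqb.
      destruct j as [|j].
      * simpl. unfold c2. simpl. field.
      * destruct (Z.eqb_spec (Z.of_nat (S j) + Z.of_nat (S j)) 0); [lia|].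
        unfold c2. simpl. rewrite sqrt2_sq. field.
    + destruct (Z.eqb_spec (Z.of_nat j - Z.of_nat l) 0); [lia|].
      destruct (Z.eqb_spec (Z.of_nat j + Z.of_nat l) 0); [lia|]. ring.
Qed.

Lemma is_RInt_sum (f : nat -> R -> R) (I : nat -> R) a b n :
  (forall i, is_RInt (f i) a b (I i)) ->
  is_RInt (fun x => sum_f_R0 (fun i => f i x) n) a b (sum_f_R0 I n).
Proof.
  intros H. induction n as [|n IH]; simpl.
  - exact (H 0%nat).
  - exact (is_RInt_plus _ _ _ _ _ _ IH (H (S n))).
Qed.

Lemma sum_mult_r (F : nat -> R) n c : sum_f_R0 F n * c = sum_f_R0 (fun i => F i * c) n.
Proof. rewrite Rmult_comm. apply scal_sum. Qed.

Lemma sum_delta (F : nat -> R) k n :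
  sum_f_R0 (fun i => F i * dl i k) n = if Nat.leb k n then F k else 0.
Proof.
  induction n as [|n IH]; simpl.
  - unfold dl. destruct k; simpl; ring.
  - rewrite IH. unfold dl. destruct (Nat.leb_spec k n); destruct (Nat.leb_spec k (S n));
      destruct (Nat.eqb_spec (S n) k); try lia; subst; ring.
Qed.

Lemma sum_zero (F : nat -> R) n : (forall i, (i <= n)%nat -> F i = 0) -> sum_f_R0 F n = 0.
Proof.
  intros H. induction n as [|n IH]; simpl.
  - apply H; lia.
  - rewrite IH by (intros; apply H; lia). rewrite H by lia. ring.
Qed.

Lemma sum_stable (F : nat -> R) K : (forall i, (K < i)%nat -> F i = 0) ->
  forall n, (K <= n)%nat -> sum_f_R0 F n = sum_f_R0 F K.
Proof.
  intros H n Hn. induction Hn as [|n Hn IH]; [reflexivity|].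
  simpl. rewrite IH, H by lia. ring.
Qed.

Lemma ipO_lc K (A : nat -> nat -> R) k l :
  ipO (lincomb K K A) (wf k l) =
  if Nat.leb k K then (if Nat.leb l K then A k l else 0) else 0.
Proof.
  unfold ipO.
  assert (Hin : forall x2, Rint (fun x1 => lincomb K K A x1 x2 * wf k l x1 x2) (-1) 1 =
     sum_f_R0 (fun i => sum_f_R0 (fun j => (A i j * v j x2 * v l x2) * dl i k) K) K).
  { intros x2. apply Rint_is.
    eapply is_RInt_ext; [| apply is_RInt_sum; intros i; apply is_RInt_sum; intros j;
       exact (is_RInt_scal _ _ _ (A i j * v j x2 * v l x2) _ (PU i k))].
    intros x1 _. cbv [scal]; simpl; unfold mult; simpl.
    unfold lincomb. rewrite sum_mult_r. apply sum_eq. intros i _.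
    rewrite sum_mult_r. apply sum_eq. intros j _. unfold wf. ring. }
  replace (fun x2 => Rint (fun x1 => lincomb K K A x1 x2 * wf k l x1 x2) (-1) 1) with
    (fun x2 => sum_f_R0 (fun i => sum_f_R0 (fun j => (A i j * v j x2 * v l x2) * dl i k) K) K)
    by (apply functional_extensionality; intros; now rewrite Hin).
  rewrite (Rint_is _ _ _ (sum_f_R0 (fun i => sum_f_R0 (fun j => (A i j * dl i k) * dl j l) K) K)).
  - rewrite (sum_eq _ (fun i => sum_f_R0 (fun j => A i j * dl j l) K * dl i k)).
    + rewrite sum_delta. destruct (Nat.leb k K); [|reflexivity].
      rewrite sum_delta. reflexivity.
    + intros i _. rewrite sum_mult_r. apply sum_eq. intros j _. ring.
  - eapply is_RInt_ext; [| apply is_RInt_sum; intros i; apply is_RInt_sum; intros j;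
       exact (is_RInt_scal _ _ _ (A i j * dl i k) _ (PV j l))].
    intros x2 _. cbv [scal]; simpl; unfold mult; simpl.
    apply sum_eq. intros i _. apply sum_eq. intros j _. ring.
Qed.

Lemma v0 j : v j 0 = c2 j.
Proof. unfold v. rewrite Rmult_0_r, cos_0. ring. Qed.

Lemma ipI_lc K (A : nat -> nat -> R) k :
  ipI (Tr (lincomb K K A)) (u k) =
  if Nat.leb k K then sum_f_R0 (fun j => A k j * c2 j) K else 0.
Proof.
  unfold ipI, Tr.
  rewrite (Rint_is _ _ _ (sum_f_R0 (fun i => sum_f_R0 (fun j => (A i j * c2 j) * dl i k) K) K)).
  - rewrite (sum_eq _ (fun i => sum_f_R0 (fun j => A i j * c2 j) K * dl i k)).
    + rewrite sum_delta; reflexivity.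
    + intros i _. rewrite sum_mult_r. reflexivity.
  - eapply is_RInt_ext; [| apply is_RInt_sum; intros i; apply is_RInt_sum; intros j;
       exact (is_RInt_scal _ _ _ (A i j * c2 j) _ (PU i k))].
    intros x _. cbv [scal]; simpl; unfold mult; simpl.
    unfold lincomb. rewrite sum_mult_r. apply sum_eq. intros i _.
    rewrite sum_mult_r. apply sum_eq. intros j _. unfold wf. rewrite v0. ring.
Qed.


Lemma ln_div' x y : 0 < x -> 0 < y -> ln (x / y) = ln x - ln y.
Proof. intros. unfold Rdiv. rewrite ln_mult, ln_Rinv; try ring; auto. apply Rinv_0_lt_compat; auto. Qed.

Lemma ln_le' x y : 0 < x -> x <= y -> ln x <= ln y.
Proof. intros Hx [H|H]; [left; now apply ln_increasing| subst; lra]. Qed.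

Lemma exp_le' x y : x <= y -> exp x <= exp y.
Proof. intros [H|H]; [left; now apply exp_increasing| subst; lra]. Qed.

Lemma ln_le_m1 t : 0 < t -> ln t <= t - 1.
Proof. intros Ht. pose proof (exp_ineq1_le (ln t)). rewrite exp_ln in H by exact Ht. lra. Qed.

Lemma tele (q y : R) : 0 < q -> 0 < y ->
  q * exp (-(q+1) * ln (y+1)) <= exp (-q * ln y) - exp (-q * ln (y+1)).
Proof.
  intros Hq Hy. set (z := y + 1). assert (Hz : 0 < z) by (unfold z; lra).
  assert (E1 : exp (-q * ln y) = exp (-q * ln z) * exp (q * (ln z - ln y))).
  { rewrite <- exp_plus. f_equal. ring. }
  assert (E2 : exp (-(q+1) * ln z) = exp (-q * ln z) * / z).
  { replace (-(q+1) * ln z) with (-q * ln z + - ln z) by ring.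
    rewrite exp_plus, exp_Ropp, exp_ln by exact Hz. reflexivity. }
  assert (L : / z <= ln z - ln y).
  { pose proof (ln_le_m1 (y / z)) as H.
    rewrite ln_div' in H by lra.
    assert (y / z - 1 = - / z) by (unfold z; field; lra). 
    assert (0 < y / z) by (apply Rdiv_lt_0_compat; lra). lra. }
  pose proof (exp_ineq1_le (q * (ln z - ln y))) as H3.
  pose proof (exp_pos (-q * ln z)) as H4.
  rewrite E1, E2.
  assert (q * / z <= q * (ln z - ln y)) by (apply Rmult_le_compat_l; lra).
  assert (exp (-q * ln z) * (q * / z) <= exp (-q * ln z) * (exp (q * (ln z - ln y)) - 1)).
  { apply Rmult_le_compat_l; lra. }
  nra.
Qed.

Lemma AB s : 1/4 < s -> forall A, 1 <= A -> forall n,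
  Rpower A (2*(s-1/4)) * sum_f_R0 (fun j => c2 j ^ 2 / Rpower (A + (INR j * PI)^2) (2*s)) n
  <= 1 + 2 * exp (2*s * ln 2) / (4*s - 1).
Proof.
  intros Hs A HA n.
  set (q := 4*s - 1). assert (Hq : 0 < q) by (unfold q; lra).
  set (B := exp (ln A / 2)).
  assert (HB : 0 < B) by apply exp_pos.
  assert (HBB : B * B = A).
  { unfold B. rewrite <- exp_plus. replace (ln A / 2 + ln A / 2) with (ln A) by field.
    apply exp_ln. lra. }
  assert (HlnB : ln B = ln A / 2) by (unfold B; apply ln_exp).
  set (e2 := exp (2*s*ln 2)).
  assert (He2 : 0 < e2) by apply exp_pos.
  assert (Hind : forall n, sum_f_R0 (fun j => c2 j ^ 2 / Rpower (A + (INR j * PI)^2) (2*s)) n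
     <= exp (- (2*s) * ln A) + 2 * e2 / q * (exp (-q * ln B) - exp (-q * ln (INR n + B)))).
  { intros m; induction m as [|n0 IH].
    - simpl. unfold c2. simpl. unfold Rpower.
      rewrite Rplus_0_l.
      replace (exp (-q * ln B) - exp (-q * ln B)) with 0 by ring.
      replace (A + 0 * PI * (0 * PI * 1)) with A by ring.
      replace (-(2*s) * ln A) with (- (2 * s * ln A)) by ring.
      rewrite exp_Ropp. lra.
    - cbn [sum_f_R0].
      assert (Hy : 0 < INR n0 + B) by (pose proof (pos_INR n0); lra).
      assert (HSn : INR (S n0) + B = (INR n0 + B) + 1) by (rewrite S_INR; ring).
      rewrite HSn. remember (INR n0 + B) as y eqn:Hyd.
      enough (c2 (S n0) ^ 2 / Rpower (A + (INR (S n0) * PI) ^ 2) (2 * s)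
              <= 2 * e2 / q * (exp (-q * ln y) - exp (-q * ln (y+1)))) by lra.
      assert (Hc : c2 (S n0) ^ 2 = 2) by (unfold c2; simpl; rewrite Rmult_1_r; apply sqrt2_sq).
      rewrite Hc.
      set (X := A + (INR (S n0) * PI) ^ 2).
      set (z := y + 1).
      assert (HX : z * z / 2 <= X).
      { unfold X, z. rewrite Hyd, S_INR. pose proof (pos_INR n0). pose proof PI2_1.
        assert (1 <= (INR n0 + 1)) by lra.
        assert (1 <= PI^2) by nra. assert (0 <= (INR n0 + 1)^2) by nra. assert ((INR n0 + 1)^2 <= (INR n0 + 1)^2 * PI^2) by nra.
        assert (0 <= (INR n0 + 1 - B)^2) by apply pow2_ge_0. rewrite <- HBB. nra. }
      assert (Hz : 0 < z) by (unfold z; lra).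
      assert (Hzz : 0 < z * z / 2) by nra.
      assert (Hln : 2 * ln z - ln 2 <= ln X).
      { replace (2 * ln z - ln 2) with (ln (z * z / 2)).
        - apply ln_le'; assumption.
        - rewrite ln_div', ln_mult by nra. ring. }
      assert (Hpow : / Rpower X (2*s) <= e2 * exp (-(q+1) * ln z)).
      { unfold Rpower. rewrite <- exp_Ropp. unfold e2. rewrite <- exp_plus.
        apply exp_le'. unfold q.
        assert (0 < s) by lra. nra. }
      pose proof (tele q y Hq Hy) as T. fold z in T.
      unfold Rdiv at 1. 
      assert (2 * / Rpower X (2 * s) <= 2 * (e2 * exp (-(q+1) * ln z))) by lra.
      assert (2 * (e2 * exp (-(q+1) * ln z)) = 2 * e2 / q * (q * exp (-(q+1) * ln z)))
        by (field; lra).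
      assert (0 <= 2 * e2 / q) by (apply Rlt_le, Rdiv_lt_0_compat; lra).
      assert (2 * e2 / q * (q * exp (-(q+1) * ln z)) <=
              2 * e2 / q * (exp (-q * ln y) - exp (-q * ln z))) by (apply Rmult_le_compat_l; assumption).
      lra. }
  specialize (Hind n).
  assert (HwI : 0 < Rpower A (2 * (s - 1/4))) by apply exp_pos.
  assert (Hpos := exp_pos (-q * ln (INR n + B))).
  apply Rle_trans with (Rpower A (2 * (s - 1/4)) * (exp (- (2*s) * ln A) + 2 * e2 / q * exp (-q * ln B))).
  - apply Rmult_le_compat_l; [lra|].
    assert (0 <= 2 * e2 / q) by (apply Rlt_le, Rdiv_lt_0_compat; lra).
    assert (2 * e2 / q * (exp (-q * ln B) - exp (-q * ln (INR n + B))) <= 2 * e2 / q * exp (-q * ln B))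
      by (apply Rmult_le_compat_l; lra).
    lra.
  - unfold Rpower. rewrite Rmult_plus_distr_l.
    rewrite <- exp_plus.
    replace (exp (2 * (s - 1 / 4) * ln A) * (2 * e2 / q * exp (-q * ln B)))
      with (2 * e2 / q * exp (2 * (s - 1 / 4) * ln A + -q * ln B))
      by (rewrite exp_plus; ring).
    rewrite HlnB.
    replace (2 * (s - 1 / 4) * ln A + - q * (ln A / 2)) with 0 by (unfold q; field).
    rewrite exp_0.
    replace (2 * (s - 1 / 4) * ln A + - (2 * s) * ln A) with (- (ln A / 2)) by field.
    assert (0 <= ln A) by (rewrite <- ln_1; apply ln_le'; lra).
    assert (exp (- (ln A / 2)) <= 1) by (rewrite <- exp_0; apply exp_le'; lra).
    unfold e2, q. lra.
Qed.

Lemma le_of_sq (R0 Q : R) : 0 <= Q -> R0 * R0 <= Q * Q -> R0 <= Q.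
Proof. intros. destruct (Rle_or_lt R0 Q) as [|H1]; [auto|nra]. Qed.

Lemma sum_sq_nonneg (x : nat -> R) n : 0 <= sum_f_R0 (fun i => x i ^ 2) n.
Proof. apply cond_pos_sum. intros. apply pow2_ge_0. Qed.

Lemma CS (x y : nat -> R) n :
  (sum_f_R0 (fun i => x i * y i) n) ^ 2 <=
  sum_f_R0 (fun i => x i ^ 2) n * sum_f_R0 (fun i => y i ^ 2) n.
Proof.
  induction n as [|n IH]; cbn [sum_f_R0].
  - nra.
  - set (P := sum_f_R0 (fun i => x i * y i) n) in *.
    set (X := sum_f_R0 (fun i => x i ^ 2) n) in *.
    set (Y := sum_f_R0 (fun i => y i ^ 2) n) in *.
    assert (HX : 0 <= X) by apply sum_sq_nonneg.
    assert (HY : 0 <= Y) by apply sum_sq_nonneg.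
    set (a := x (S n)). set (b := y (S n)).
    assert (HQ : 0 <= a*a*Y + b*b*X) by nra.
    assert (H2 : 2*a*b*P <= a*a*Y + b*b*X).
    { apply le_of_sq; [exact HQ|].
      assert (0 <= (a*a*Y - b*b*X)^2) by apply pow2_ge_0.
      assert (0 <= 4*(a*a)*(b*b)*(X*Y - P^2)).
      { apply Rmult_le_pos; [nra|]. lra. }
      assert (E : (a*a*Y + b*b*X)*(a*a*Y + b*b*X) - (2*a*b*P)*(2*a*b*P) =
                  (a*a*Y - b*b*X)^2 + 4*(a*a)*(b*b)*(X*Y - P^2)) by ring.
      lra. }
    assert (E : (X + a^2) * (Y + b^2) - (P + a*b)^2 = (X*Y - P^2) + (a*a*Y + b*b*X - 2*a*b*P)) by ring.
    lra.
Qed.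

Lemma WCS (c Av w : nat -> R) n : (forall j, 0 < w j) ->
  (sum_f_R0 (fun j => Av j * c j) n) ^ 2 <=
  sum_f_R0 (fun j => c j ^ 2 / w j) n * sum_f_R0 (fun j => w j * Av j ^ 2) n.
Proof.
  intros Hw.
  pose proof (CS (fun j => c j / sqrt (w j)) (fun j => sqrt (w j) * Av j) n) as H.
  assert (Hs : forall j, 0 < sqrt (w j)) by (intros; apply sqrt_lt_R0, Hw).
  assert (Hss : forall j, sqrt (w j) * sqrt (w j) = w j) by (intros; apply sqrt_sqrt, Rlt_le, Hw).
  rewrite (sum_eq (fun j => c j / sqrt (w j) * (sqrt (w j) * Av j)) (fun j => Av j * c j)) in H
    by (intros j _; specialize (Hs j); field; lra).
  rewrite (sum_eq (fun j => (c j / sqrt (w j)) ^ 2) (fun j => c j ^ 2 / w j)) in H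
    by (intros j _; specialize (Hs j); specialize (Hss j);
        replace (c j ^ 2 / w j) with (c j ^ 2 / (sqrt (w j) * sqrt (w j))) by (rewrite Hss; reflexivity);
        field; lra).
  rewrite (sum_eq (fun j => (sqrt (w j) * Av j) ^ 2) (fun j => w j * Av j ^ 2)) in H
    by (intros j _; specialize (Hss j);
        replace (w j * Av j ^ 2) with (sqrt (w j) * sqrt (w j) * Av j ^ 2) by (rewrite Hss; reflexivity);
        ring).
  exact H.
Qed.

Lemma EC (U : nat -> R) K : (forall n, (K <= n)%nat -> U n = U K) ->
  Un_cv U (U K) /\ Rlim U = U K.
Proof.
  intros H.
  assert (Hc : Un_cv U (U K)).
  { intros eps He. exists K. intros n Hn. rewrite H by lia. unfold R_dist.
    replace (U K - U K) with 0 by ring. rewrite Rabs_R0. exact He. }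
  split; [exact Hc|].
  unfold Rlim. destruct (excluded_middle_informative _) as [h|h].
  - destruct (constructive_indefinite_description _ h) as [l Hl]. simpl.
    eapply UL_sequence; eauto.
  - exfalso. apply h. eauto.
Qed.

Definition Cst (s : R) : R := 1 + 2 * exp (2*s * ln 2) / (4*s - 1).

Lemma Main (s : R) (hs : 1/4 < s) K (A : nat -> nat -> R) :
  in_XI (s - 1/4) (Tr (lincomb K K A)) /\
  XI_norm (s - 1/4) (Tr (lincomb K K A)) <= sqrt (Cst s) * XO_norm s (lincomb K K A).
Proof.
  set (w := lincomb K K A).
  assert (HI : forall n, (K <= n)%nat ->
     XI_partial (s - 1/4) (Tr w) n = XI_partial (s - 1/4) (Tr w) K).
  { intros n Hn. unfold XI_partial. apply sum_stable; [|exact Hn].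
    intros i Hi. unfold w. rewrite ipI_lc.
    destruct (Nat.leb_spec i K); [lia|]. ring. }
  assert (HO : forall n, (K <= n)%nat -> XO_partial s w n = XO_partial s w K).
  { intros n Hn. unfold XO_partial.
    rewrite (sum_eq _ (fun i => sum_f_R0 (fun j =>
       Rpower (1 - lamO i j) (2 * s) * ipO w (wf i j) ^ 2) K)).
    - apply sum_stable; [|exact Hn].
      intros i Hi. apply sum_zero. intros j _. unfold w. rewrite ipO_lc.
      destruct (Nat.leb_spec i K); [lia|]. ring.
    - intros i _. apply sum_stable; [|exact Hn].
      intros j Hj. unfold w. rewrite ipO_lc.
      destruct (Nat.leb_spec i K); destruct (Nat.leb_spec j K); try lia; ring. }
  destruct (EC _ _ HI) as [CI LI]. destruct (EC _ _ HO) as [CO LO].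
  split; [exists (XI_partial (s - 1/4) (Tr w) K); exact CI|].
  unfold XI_norm, XO_norm. rewrite LI, LO.
  assert (HC : 0 <= Cst s).
  { unfold Cst. assert (0 < 2 * exp (2*s * ln 2) / (4*s - 1)).
    { apply Rdiv_lt_0_compat; [pose proof (exp_pos (2*s*ln 2)); lra| lra]. } lra. }
  rewrite <- sqrt_mult_alt by exact HC. apply sqrt_le_1_alt.
  unfold XI_partial, XO_partial. rewrite scal_sum.
  apply sum_Rle. intros k Hk.
  unfold w. rewrite ipI_lc. destruct (Nat.leb_spec k K); [|lia].
  rewrite (sum_eq (fun l => Rpower (1 - lamO k l) (2 * s) * ipO (lincomb K K A) (wf k l) ^ 2)
                  (fun l => Rpower (1 - lamO k l) (2 * s) * A k l ^ 2))
    by (intros l Hl; rewrite ipO_lc; destruct (Nat.leb_spec k K); destruct (Nat.leb_spec l K);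
        try lia; reflexivity).
  set (Ak := 1 - lamI k).
  assert (HAk : 1 <= Ak) by (unfold Ak, lamI; pose proof (pow2_ge_0 (INR k * PI / 2)); lra).
  assert (Hid : forall j, 1 - lamO k j = Ak + (INR j * PI) ^ 2) by (intros; unfold Ak, lamO, lamI; ring).
  pose proof (WCS c2 (A k) (fun j => Rpower (1 - lamO k j) (2 * s)) K (fun j => exp_pos _)) as Hcs.
  simpl in Hcs.
  pose proof (AB s hs Ak HAk K) as Hab.
  rewrite (sum_eq (fun j => c2 j ^ 2 / Rpower (1 - lamO k j) (2 * s))
                  (fun j => c2 j ^ 2 / Rpower (Ak + (INR j * PI) ^ 2) (2 * s))) in Hcs
    by (intros j _; rewrite Hid; reflexivity).
  set (S1 := sum_f_R0 (fun j => c2 j ^ 2 / Rpower (Ak + (INR j * PI) ^ 2) (2 * s)) K) in *.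
  set (S2 := sum_f_R0 (fun l => Rpower (1 - lamO k l) (2 * s) * A k l ^ 2) K) in *.
  assert (HS2 : 0 <= S2).
  { apply cond_pos_sum. intros l. apply Rmult_le_pos; [left; apply exp_pos| apply pow2_ge_0]. }
  assert (HwI : 0 < Rpower Ak (2 * (s - 1/4))) by apply exp_pos.
  fold (Cst s) in Hab.
  apply Rle_trans with (Rpower Ak (2 * (s - 1/4)) * (S1 * S2)).
  - apply Rmult_le_compat_l; [lra | exact Hcs].
  - rewrite <- Rmult_assoc. rewrite (Rmult_comm S2). apply Rmult_le_compat_r; [exact HS2| exact Hab].
Qed.

Lemma reduce N M (a : nat -> nat -> R) :
  lincomb N M a = lincomb (max N M) (max N M)
    (fun i j => if andb (Nat.leb i N) (Nat.leb j M) then a i j else 0).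
Proof.
  apply functional_extensionality; intros x1. apply functional_extensionality; intros x2.
  unfold lincomb. set (K := max N M).
  set (G := fun i => sum_f_R0 (fun j => (if andb (Nat.leb i N) (Nat.leb j M) then a i j else 0)
                                        * wf i j x1 x2) K).
  change (sum_f_R0 (fun i => sum_f_R0 (fun j => a i j * wf i j x1 x2) M) N = sum_f_R0 G K).
  rewrite (sum_stable G N).
  - apply sum_eq. intros i Hi. unfold G.
    rewrite (sum_stable (fun j => (if andb (Nat.leb i N) (Nat.leb j M) then a i j else 0) * wf i j x1 x2) M ltac:(intros j Hj; cbv beta; destruct (Nat.leb_spec j M); [lia|]; rewrite Bool.andb_false_r; ring) K); [|unfold K; lia].
    apply sum_eq. intros j Hj. destruct (Nat.leb_spec i N); destruct (Nat.leb_spec j M);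
        try lia; reflexivity.
  - intros i Hi. unfold G. apply sum_zero. intros j _.
    destruct (Nat.leb_spec i N); [lia|]. simpl. ring.
  - unfold K; lia.
Qed.

Theorem lemma12 (s : R) (hs : 1/4 < s) :
  exists C : R, forall (N M : nat) (a : nat -> nat -> R),
    in_XI (s - 1/4) (Tr (lincomb N M a)) /\
    XI_norm (s - 1/4) (Tr (lincomb N M a)) <= C * XO_norm s (lincomb N M a).
Proof.
  exists (sqrt (Cst s)). intros N M a. rewrite reduce. apply Main. exact hs.
Qed.
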